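(* Let $\underline d=(1,d_1,\dots,d_r)$ and let $I_{r+1}\subset\cdots\subset I_1\subset I_0=\mathbb{C}[x_1,\dots,x_n]$ be a flag of monomial ideals with $\dim I_k/I_{k+1}=d_k$, with corresponding flag of partitions $\lambda_1\subset\lambda_2\subset\cdots\subset\lambda_{r+1}\subset\mathbb{Z}^n_{\ge0}$. Then the corresponding fixed point of $\mathrm{NHilb}^{\underline d}(\mathbb{A}^n)$ lies in $\mathrm{NHilb}^{\underline d}_{\mathrm{nil\text{-}fil}}(\mathbb{A}^n)$ if and only if for all $k\ge1$, all $\mathbf u\in\lambda_{k+1}\setminus\lambda_k$ and all $i=1,\dots,n$ we have $\mathbf u+e_i\notin\lambda_{k+1}$.
   Context: $\lambda_k$ is the set of exponents $\mathbf u\in\mathbb{Z}^n_{\ge0}$ with $x^{\mathbf u}\notin I_k$. $\mathrm{NHilb}^{\underline d}_{\mathrm{nil\text{-}fil}}(\mathbb{A}^n)$, the nilpotently filtered locus, is the locus of flags of ideals $I_{r+1}\subset\cdots\subset I_1\subset I_0=\mathbb{C}[x_1,\dots,x_n]$ with $\dim I_k/I_{k+1}=d_k$ such that $I_1=\mathfrak m=(x_1,\dots,x_n)$ and $I_1\cdot I_k\subset I_{k+1}$ for all $k$. $e_i$ is the $i$-th unit vector. *)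

(* Defs.v *)
From mathcomp Require Import all_boot all_algebra.
From mathcomp Require Import Rstruct.
From mathcomp Require Import complex.
From mathcomp Require Import mpoly.

Set Implicit Arguments.
Unset Strict Implicit.
Unset Printing Implicit Defensive.
Import GRing.Theory.
Local Open Scope ring_scope.

Definition CC : fieldType := complex Rdefinitions.R.

Notation Poly n := {mpoly CC[n]}.

Definition pset (n : nat) := Poly n -> Prop.

Definition subpset n (I J : pset n) : Prop := forall p, I p -> J p.

Definition is_ideal n (I : pset n) : Prop :=
  [/\ I 0, (forall p q, I p -> I q -> I (p + q)) &
      (forall p q, I q -> I (p * q))].

Definition is_monomial_ideal n (I : pset n) : Prop :=
  is_ideal I /\ forall p, I p <-> (forall m, m \in msupp p -> I 'X_[m]).

Definition unit_ideal n : pset n := fun _ => True.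

Definition max_ideal n : pset n :=
  fun p => exists q : 'I_n -> Poly n, p = \sum_(i < n) q i * 'X_i.

Definition ideal_mul n (I J : pset n) : pset n :=
  fun p => exists s : seq (Poly n * Poly n),
    (forall x, x \in s -> I x.1 /\ J x.2) /\ p = \sum_(x <- s) x.1 * x.2.

(* dim_C (I / J) = d, for J subset of I. *)
Definition quot_dim n (I J : pset n) (d : nat) : Prop :=
  exists b : 'I_d -> Poly n,
    [/\ forall i, I (b i),
        (forall p, I p -> exists c : 'I_d -> CC,
             J (p - \sum_(i < d) c i *: b i)) &
        (forall c : 'I_d -> CC, J (\sum_(i < d) c i *: b i) -> forall i, c i = 0)].

Definition monomial_flag n (r : nat) (d : nat -> nat) (I : nat -> pset n) : Prop :=
  [/\ d 0%N = 1%N,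
      (forall k, (k <= r.+1)%N -> is_monomial_ideal (I k)),
      (forall p, I 0%N p <-> unit_ideal p),
      (forall k, (k <= r)%N -> subpset (I k.+1) (I k)) &
      (forall k, (k <= r)%N -> quot_dim (I k) (I k.+1) (d k))].

(* The nilpotently filtered locus: I_1 = m and I_1 * I_k c I_{k+1}. *)
Definition nil_filtered n (r : nat) (I : nat -> pset n) : Prop :=
  (forall p, I 1%N p <-> max_ideal p) /\
  (forall k, (k <= r)%N -> subpset (ideal_mul (I 1%N) (I k)) (I k.+1)).

Definition lam n (I : pset n) (u : 'X_{1..n}) : Prop := ~ I 'X_[u].

(* Main.v *)
Require Import Defs.
From mathcomp Require Import all_boot all_algebra.
From mathcomp Require Import Rstruct complex mpoly.
From Stdlib Require Import Classical.
Local Open Scope ring_scope.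
Import GRing.Theory.

Section Helpers.
Variable n : nat.

Lemma ideal_sum (I : pset n) (T : Type) (s : seq T) (P : pred T) (F : T -> {mpoly CC[n]}) :
  is_ideal I -> (forall x, P x -> I (F x)) -> I (\sum_(x <- s | P x) F x).
Proof.
move=> [h0 hD hM] hF; apply: (big_ind I) => //.
Qed.

Lemma ideal_scale (I : pset n) c p : is_ideal I -> I p -> I (c *: p).
Proof. by move=> [h0 hD hM] hp; rewrite -mul_mpolyC; apply: hM. Qed.

Lemma ideal_sub (I : pset n) p q : is_ideal I -> I p -> I q -> I (p - q).
Proof.
move=> hI hp hq; case: (hI) => _ hD _; apply: hD => //.
rewrite -scaleN1r; exact: ideal_scale.
Qed.

Lemma max_ideal_ideal : is_ideal (@max_ideal n).
Proof.
split.
- exists (fun _ => 0); by rewrite big1 // => i _; rewrite mul0r.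
- move=> p q [a ->] [b ->]; exists (fun i => a i + b i).
  by rewrite -big_split /=; apply: eq_bigr => i _; rewrite mulrDl.
- move=> p q [a ->]; exists (fun i => p * a i).
  by rewrite mulr_sumr; apply: eq_bigr => i _; rewrite mulrA.
Qed.

Lemma max_ideal_Xi (i : 'I_n) : @max_ideal n 'X_i.
Proof.
exists (fun j => if j == i then 1 else 0).
rewrite (bigD1 i) //= eqxx mul1r big1 ?addr0 // => j /negbTE ->; by rewrite mul0r.
Qed.

Lemma max_ideal_X (m : 'X_{1..n}) : m != 0%MM -> @max_ideal n 'X_[m].
Proof.
move=> hm.
have [i hi] : exists i, m i != 0%N.
  apply: NNPP => hn; case/eqP: hm; apply/mnmP => j; rewrite mnm0E.
  by apply/eqP; apply: NNPP => hj; apply: hn; exists j; apply/negP.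
have hle : (U_(i) <= m)%MM.
  apply/mnm_lepP => j; rewrite mnm1E; case: eqP => [<-|//]; by rewrite lt0n.
rewrite -(submK hle) mpolyXD.
case: max_ideal_ideal => _ _ hM; exact: hM (max_ideal_Xi i).
Qed.

End Helpers.

Theorem mainTheorem19 (n r : nat) (d : nat -> nat) (I : nat -> pset n) :
  monomial_flag r d I ->
  (nil_filtered r I <->
   (forall k : nat, (1 <= k <= r)%N ->
    forall u : 'X_{1..n}, lam (I k.+1) u -> ~ lam (I k) u ->
    forall i : 'I_n, ~ lam (I k.+1) (u + U_(i))%MM)).
Proof.
move=> [d0 hmon hI0 hsub hq]; split.
- move=> [h1 hmul] k /andP [k1 kr] u _ hku i; rewrite /lam => hn; apply: hn.
  apply: (hmul k kr); exists [:: ('X_i, 'X_[u])]; split.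
  + move=> x; rewrite inE => /eqP -> /=; split; first exact/h1/max_ideal_Xi.
    by apply: NNPP.
  + by rewrite big_seq1 /= mpolyXD mulrC.
- move=> hcond.
  have [hI1 hM1] := hmon 1%N isT.
  have [I10 I1D I1M] := hI1.
  have n1 : ~ I 1%N 1.
    move=> h1; move: (hq 0%N isT); rewrite d0 => -[b [_ _ hind]].
    have := hind (fun _ => 1) _ ord0.
    rewrite -(mulr1 (\sum_(i < 1) _)); move=> /(_ (I1M _ _ h1)) /eqP.
    by rewrite oner_eq0.
  have hX : forall i : 'I_n, I 1%N 'X_i.
    move=> i; move: (hq 0%N isT); rewrite d0 => -[b [_ hspan _]].
    have [c1 h1] := hspan 1 ((hI0 _).2 Logic.I).
    have [c2 h2] := hspan 'X_i ((hI0 _).2 Logic.I).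
    rewrite big_ord1 in h1; rewrite big_ord1 in h2.
    have c1n : c1 ord0 != 0.
      apply/negP => /eqP c10; apply: n1; by rewrite c10 scale0r subr0 in h1.
    set a := c2 ord0 / c1 ord0.
    have h3 : I 1%N ('X_i - a%:MP).
      have -> : 'X_i - a%:MP = ('X_i - c2 ord0 *: b ord0) - a *: (1 - c1 ord0 *: b ord0).
        rewrite scalerBr scalerA /a mulfVK // opprB addrA subrK.
        by rewrite -mul_mpolyC mulr1.
      apply: ideal_sub => //; exact: ideal_scale.
    have [a0|an] := eqVneq a 0.
      by rewrite a0 subr0 in h3.
    exfalso; apply: n1; rewrite -mpolyX0.
    apply: ((hM1 _).1 h3); rewrite mcoeff_msupp mcoeffB mcoeffX mcoeffC.
    rewrite eq_sym mnm1_eq0 eqxx mulr1 sub0r.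
    by rewrite eq_sym oppr_eq0.
  have h1eq : forall p, I 1%N p <-> max_ideal p.
    move=> p; split.
    + move=> hp; rewrite (mpolyE p) big_seq.
      apply: ideal_sum; first exact: max_ideal_ideal.
      move=> m hm; apply: ideal_scale; first exact: max_ideal_ideal.
      apply: max_ideal_X; apply/negP => /eqP m0.
      apply: n1; rewrite -mpolyX0 -m0; exact: ((hM1 p).1 hp).
    + move=> [q ->]; apply: ideal_sum => // i _; exact: I1M.
  split => // k kr p [s [hs ->]].
  have [hIk hMk] := hmon k.+1 kr.
  have [Ik0 IkD IkM] := hIk.
  rewrite big_seq; apply: ideal_sum => // x /hs [/h1eq [q ->] hb].
  rewrite mulr_suml; apply: ideal_sum => // i _.
  case: k kr hb hs hIk Ik0 IkD IkM hMk => [|k] kr hb hs hIk Ik0 IkD IkM hMk.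
    by rewrite mulrC mulrA; apply: I1M; exact: hX.
  have [hIk' hMk'] := hmon k.+1 (leq_trans kr (leqnSn _)).
  rewrite (mpolyE x.2) mulr_sumr big_seq.
  apply: ideal_sum => // m hm.
  rewrite -scalerAr; apply: ideal_scale => //.
  rewrite -mulrA; apply: (IkM).
  have hxm : I k.+1 'X_[m] := (hMk' x.2).1 hb m hm.
  have : I k.+2 ('X_[m + U_(i)]).
    case: (classic (I k.+2 'X_[m])) => hm2.
      by rewrite mpolyXD mulrC; apply: (IkM).
    have h1 : ~ lam (I k.+1) m by move=> hh; exact: hh hxm.
    have h0 : (0 < k.+1 <= r)%N by exact: kr.
    apply: NNPP => hn; exact: (hcond k.+1 h0 m hm2 h1 i hn).
  by rewrite mpolyXD mulrC.
Qed.
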